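(* Let $X$ be a real Banach space and $J,Y$ closed subspaces with $J\subseteq Y\subseteq X$, where $J$ is an $M$-ideal in $X$. If $Y/J$ has property-$(HB)$ in $X/J$, then $Y$ has property-$(HB)$ in $X$.
   Context: For a closed subspace $V$ of a Banach space $E$, $V^\perp=\{e^*\in E^*:e^*|_V=0\}$. $J$ is an $M$-ideal in $X$ if there is a closed subspace $W$ of $X^*$ with $X^*=J^\perp\oplus W$ and $\|u+w\|=\|u\|+\|w\|$ for $u\in J^\perp,w\in W$. $V$ has property-$(HB)$ in $E$ if there is a linear projection $P$ on $E^*$ with range $V^\perp$ and $\|P\|=1$ such that, writing $G=(I-P)(E^* )$, for every $e^*=v^\#+v^\perp$ with $v^\#\in G$, $0\neq v^\perp\in V^\perp$, one has $\|e^*\|>\|v^\#\|$ and $\|e^*\|\ge\|v^\perp\|$. $Y/J$ is regarded as a subspace of $X/J$ with the quotient norm. *)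

(* Defs.v *)
From HB Require Import structures.
From mathcomp Require Import all_boot all_order all_algebra.
From mathcomp Require Import all_classical all_reals all_analysis.
Set Implicit Arguments. Unset Strict Implicit. Unset Printing Implicit Defensive.
Import Order.TTheory GRing.Theory Num.Theory.
Local Open Scope classical_set_scope.
Local Open Scope ring_scope.

(* Functionals on a space E are represented as functions X -> R on the
   underlying vector space X; E is given by a seminorm N on X
   (N = norm of X for E = X, N = quotient seminorm for E = X/J). *)

Definition is_subspace {R : realType} {X : normedModType R} (V : set X) :=
  V 0 /\ forall (a : R) (x y : X), V x -> V y -> V (a *: x + y).

Definition closed_subspace {R : realType} {X : normedModType R} (V : set X) :=
  closed V /\ is_subspace V.

Definition lin_fun {R : realType} {X : normedModType R} (f : X -> R) :=
  forall (a : R) (x y : X), f (a *: x + y) = a * f x + f y.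

Definition dualN {R : realType} {X : normedModType R} (N : X -> R) (f : X -> R) :=
  lin_fun f /\ exists C : R, forall x, `|f x| <= C * N x.

Definition fnorm {R : realType} {X : normedModType R} (N : X -> R) (f : X -> R) : R :=
  sup [set `|f x| | x in [set x | N x <= 1]].

Definition perp {R : realType} {X : normedModType R} (V : set X) (f : X -> R) :=
  forall v, V v -> f v = 0.

Definition nrm {R : realType} {X : normedModType R} (x : X) : R := `|x|.

Definition qnorm {R : realType} {X : normedModType R} (J : set X) (x : X) : R :=
  inf [set `|x + j| | j in J].

Definition propHB {R : realType} {X : normedModType R} (N : X -> R) (V : set X) :=
  exists P : (X -> R) -> (X -> R),
    (forall f, dualN N f -> dualN N (P f)) /\
        (forall (a : R) f g, dualN N f -> dualN N g ->
            P (fun x => a * f x + g x) = (fun x => a * P f x + P g x)) /\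
        (forall f, dualN N f -> P (P f) = P f) /\
        (forall f, dualN N f -> perp V (P f)) /\
        (forall g, dualN N g -> perp V g -> exists2 f, dualN N f & P f = g) /\
        sup [set fnorm N (P f) | f in [set f | dualN N f /\ fnorm N f <= 1]] = 1 /\
      (forall f vp, dualN N f -> dualN N vp -> perp V vp -> vp <> (fun _ => 0) ->
           let vs := (fun x => f x - P f x) in
           let e := (fun x => vs x + vp x) in
           fnorm N vs < fnorm N e /\ fnorm N vp <= fnorm N e).

Definition M_ideal {R : realType} {X : normedModType R} (J : set X) :=
  exists W : set (X -> R),
    (forall w, W w -> dualN nrm w) /\
        W (fun _ => 0) /\
        (forall (a : R) w1 w2, W w1 -> W w2 -> W (fun x => a * w1 x + w2 x)) /\
        (forall f, dualN nrm f ->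
           (forall e : R, 0 < e -> exists2 w, W w & fnorm nrm (fun x => f x - w x) < e) ->
           W f) /\
        (forall f, dualN nrm f -> perp J f -> W f -> f = (fun _ => 0)) /\
        (forall f, dualN nrm f -> exists u, exists2 w,
              dualN nrm u /\ perp J u & W w /\ f = (fun x => u x + w x)) /\
      (forall u w, dualN nrm u -> perp J u -> W w ->
           fnorm nrm (fun x => u x + w x) = fnorm nrm u + fnorm nrm w).

(* Main.v *)
Require Import Defs.
From mathcomp Require Import all_boot all_order all_algebra.
From mathcomp Require Import all_classical all_reals all_analysis.
Import Order.TTheory GRing.Theory Num.Theory.
Local Open Scope classical_set_scope.
Local Open Scope ring_scope.
Set Implicit Arguments. Unset Strict Implicit.

Lemma lin0 (R : realType) (X : normedModType R) (f : X -> R) : lin_fun f -> f 0 = 0.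
Proof. move=> lf; have h := lf 1 0 0; rewrite scale1r addr0 mul1r in h.
have : f 0 + f 0 - f 0 = f 0 - f 0 by rewrite -h.
by rewrite addrK subrr. Qed.

Lemma linZ (R : realType) (X : normedModType R) (f : X -> R) a x : lin_fun f -> f (a *: x) = a * f x.
Proof. move=> lf; have := lf a x 0; by rewrite addr0 lin0 // addr0. Qed.

Lemma linD (R : realType) (X : normedModType R) (f : X -> R) x y : lin_fun f -> f (x + y) = f x + f y.
Proof. move=> lf; have := lf 1 x y; by rewrite scale1r mul1r. Qed.

Lemma fnorm_ge0 (R : realType) (X : normedModType R) (N : X -> R) f : 0 <= fnorm N f.
Proof.
rewrite /fnorm; set S := [set _ | _ in _].
have [hs|hs] := pselect (has_sup S); last by rewrite sup_out.
case: (hs) => [[y [x x1 Hy]] _]; subst y.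
apply: le_trans (normr_ge0 (f x)) _.
by apply: ub_le_sup; [case: hs|exists x].
Qed.

Lemma inf_mul_lb (R : realType) (S : set R) (a c : R) :
  S !=set0 -> 0 <= c -> (forall s, S s -> a <= c * s) -> a <= c * inf S.
Proof.
move=> ne c0 H.
have [cz|cp] := eqVneq c 0.
  move: ne => [s Ss]; have := H s Ss; rewrite cz !mul0r; exact.
have cg : 0 < c by rewrite lt_def cp c0.
rewrite -ler_pdivrMl //; apply: lb_le_inf => // s Ss.
by rewrite ler_pdivrMl //; apply: H.
Qed.
From mathcomp Require Import lra ring.

Lemma qS_ne (R : realType) (X : normedModType R) (J : set X) x :
  is_subspace J -> [set `|x + j| | j in J] !=set0.
Proof. by case=> J0 _; exists `|x + 0|; exists 0. Qed.

Lemma qnorm_ge0 (R : realType) (X : normedModType R) (J : set X) x :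
  is_subspace J -> 0 <= qnorm J x.
Proof. move=> sJ; apply: lb_le_inf; first exact: qS_ne.
by move=> _ [j _ <-]. Qed.

Lemma qS_lb (R : realType) (X : normedModType R) (J : set X) x :
  has_lbound [set `|x + j| | j in J].
Proof. by exists 0 => _ [j _ <-]. Qed.

Lemma qnorm_le (R : realType) (X : normedModType R) (J : set X) x j :
  J j -> qnorm J x <= `|x + j|.
Proof. by move=> Jj; rewrite /qnorm; apply: (ge_inf (qS_lb J x)); exists j. Qed.

Lemma qnorm_leN (R : realType) (X : normedModType R) (J : set X) x :
  is_subspace J -> qnorm J x <= `|x|.
Proof. by case=> J0 _; have := qnorm_le x J0; rewrite addr0. Qed.

Lemma qnorm_J (R : realType) (X : normedModType R) (J : set X) j :
  is_subspace J -> J j -> qnorm J j <= 0.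
Proof. case=> J0 sJ Jj; have := qnorm_le j (sJ (-1) j 0 Jj J0).
by rewrite addr0 scaleN1r subrr normr0. Qed.

Lemma qnorm_bound (R : realType) (X : normedModType R) (J : set X) (f : X -> R) c x :
  is_subspace J -> 0 <= c -> (forall j, J j -> `|f x| <= c * `|x + j|) ->
  `|f x| <= c * qnorm J x.
Proof. move=> sJ c0 H; apply: inf_mul_lb => //; first exact: qS_ne.
by move=> _ [j Jj <-]; apply: H. Qed.

Lemma dualq_dual (R : realType) (X : normedModType R) (J : set X) f :
  is_subspace J -> dualN (qnorm J) f -> dualN nrm f /\ perp J f.
Proof.
move=> sJ [lf [C HC]]; split.
  split => //; exists `|C| => x.
  apply: le_trans (HC x) _; rewrite /nrm.
  have h1 := qnorm_ge0 x sJ; have h2 := qnorm_leN x sJ.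
  have h3 : C <= `|C| := ler_norm C. have h4 : 0 <= `|C| := normr_ge0 C.
  nra.
move=> j Jj; have := HC j; have h1 := qnorm_ge0 j sJ; have h2 := qnorm_J sJ Jj.
have -> : qnorm J j = 0 by apply/eqP; rewrite eq_le h2 h1.
by rewrite mulr0 normr_le0 => /eqP.
Qed.

Lemma dual_dualq (R : realType) (X : normedModType R) (J : set X) f :
  is_subspace J -> dualN nrm f -> perp J f -> dualN (qnorm J) f.
Proof.
move=> sJ [lf [C HC]] pf; split => //; exists `|C| => x.
apply: qnorm_bound => // j Jj.
have -> : f x = f (x + j) by rewrite linD // (pf j Jj) addr0.
apply: le_trans (HC _) _; rewrite /nrm.
have h3 : C <= `|C| := ler_norm C. have h4 := normr_ge0 (x + j). nra.
Qed.

Lemma fnorm_has_sup (R : realType) (X : normedModType R) (f : X -> R) :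
  dualN nrm f -> has_sup [set `|f x| | x in [set x | nrm x <= 1]].
Proof.
move=> [lf [C HC]]; split.
  by exists `|f 0|; exists 0 => //=; rewrite /nrm normr0.
exists `|C| => _ [x /= x1 <-]; apply: le_trans (HC x) _; move: x1; rewrite /nrm => x1.
have h3 : C <= `|C| := ler_norm C. have h4 := normr_ge0 x. have h5 := normr_ge0 C. nra.
Qed.

Lemma fnorm_bound (R : realType) (X : normedModType R) (f : X -> R) y :
  dualN nrm f -> `|f y| <= fnorm nrm f * `|y|.
Proof.
move=> df; have lf := df.1.
have [->|y0] := eqVneq y 0; first by rewrite lin0 // !normr0 mulr0.
have ny : 0 < `|y| by rewrite normr_gt0.
have : `|f (`|y|^-1 *: y)| <= fnorm nrm f.
  apply: ub_le_sup; first by case: (fnorm_has_sup df).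
  exists (`|y|^-1 *: y) => //=; rewrite /nrm normrZ ger0_norm ?invr_ge0 ?normr_ge0 //.
  by rewrite mulVf // gt_eqF.
rewrite linZ // normrM ger0_norm ?invr_ge0 ?normr_ge0 //.
by rewrite mulrC -ler_pdivlMr ?invr_gt0 // invrK.
Qed.

Lemma fnorm_q (R : realType) (X : normedModType R) (J : set X) (g : X -> R) :
  is_subspace J -> dualN nrm g -> perp J g -> fnorm (qnorm J) g = fnorm nrm g.
Proof.
move=> sJ dg pg.
have ubB : ubound [set `|g x| | x in [set x | qnorm J x <= 1]] (fnorm nrm g).
  move=> _ [x /= x1 <-].
  have : `|g x| <= fnorm nrm g * qnorm J x.
    apply: qnorm_bound => //; first exact: fnorm_ge0.
    move=> j Jj; have -> : g x = g (x + j) by rewrite linD ?(pg j Jj) ?addr0 //; case: dg.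
    exact: fnorm_bound.
  have := fnorm_ge0 nrm g; have := qnorm_ge0 x sJ; nra.
have neB : [set `|g x| | x in [set x | qnorm J x <= 1]] !=set0.
  exists `|g 0|; exists 0 => //=; apply: le_trans (qnorm_leN 0 sJ) _.
  by rewrite normr0.
apply/eqP; rewrite eq_le; apply/andP; split.
  exact: ge_sup.
apply: ge_sup; first by case: (fnorm_has_sup dg).
move=> _ [x /= x1 <-]; apply: ub_le_sup; first by exists (fnorm nrm g).
exists x => //=; apply: le_trans (qnorm_leN x sJ) x1.
Qed.

Lemma dual_comb (R : realType) (X : normedModType R) (f g : X -> R) a :
  dualN nrm f -> dualN nrm g -> dualN nrm (fun x => a * f x + g x).
Proof.
move=> [lf [C1 H1]] [lg [C2 H2]]; split.
  move=> b x y; rewrite lf lg; ring.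
exists (`|a| * `|C1| + `|C2|) => x; rewrite /nrm.
have h1 := H1 x; have h2 := H2 x; rewrite /nrm in h1 h2.
have e1 := ler_normD (a * f x) (g x); rewrite normrM in e1.
have c1 : C1 <= `|C1| := ler_norm C1. have c2 : C2 <= `|C2| := ler_norm C2.
have n1 := normr_ge0 x. have n2 := normr_ge0 a. have n3 := normr_ge0 C1.
have n4 := normr_ge0 (f x).
have k1 : `|f x| <= `|C1| * `|x| by apply: le_trans h1 _; nra.
have k2 : `|a| * `|f x| <= `|a| * (`|C1| * `|x|) by apply: ler_wpM2l.
nra.
Qed.

Lemma perp_comb (R : realType) (X : normedModType R) (V : set X) (f g : X -> R) a :
  perp V f -> perp V g -> perp V (fun x => a * f x + g x).
Proof. by move=> pf pg v Vv; rewrite pf // pg // mulr0 addr0. Qed.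

Lemma dual_add (R : realType) (X : normedModType R) (f g : X -> R) :
  dualN nrm f -> dualN nrm g -> dualN nrm (fun x => f x + g x).
Proof. move=> df dg; have := dual_comb 1 df dg.
by have -> : (fun x => 1 * f x + g x) = (fun x => f x + g x) by apply: funext => x; ring.
Qed.

Lemma dual_sub (R : realType) (X : normedModType R) (f g : X -> R) :
  dualN nrm f -> dualN nrm g -> dualN nrm (fun x => f x - g x).
Proof. move=> df dg; have := dual_comb (-1) dg df.
by have -> : (fun x => -1 * g x + f x) = (fun x => f x - g x) by apply: funext => x; ring.
Qed.

Lemma perp_add (R : realType) (X : normedModType R) (V : set X) (f g : X -> R) :
  perp V f -> perp V g -> perp V (fun x => f x + g x).
Proof. by move=> pf pg v Vv; rewrite pf // pg // addr0. Qed.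

Lemma perp_sub (R : realType) (X : normedModType R) (V : set X) (f g : X -> R) :
  perp V f -> perp V g -> perp V (fun x => f x - g x).
Proof. by move=> pf pg v Vv; rewrite pf // pg // subrr. Qed.

Theorem theorem3p11 (R : realType) (X : completeNormedModType R) (J Y : set X) :
  closed_subspace J -> closed_subspace Y -> J `<=` Y ->
  M_ideal J -> propHB (qnorm J) Y -> propHB nrm Y.
Proof.
move=> [_ sJ] _ JY [W [Wd [W0 [Wlin [_ [Winter [Wdec Wadd]]]]]]].
move=> [Q [Qd [Qlin [Qidem [Qperp [Qsurj [Qsup QHB]]]]]]].
have ex : forall f : X -> R, exists u : X -> R, dualN nrm f ->
    dualN nrm u /\ perp J u /\ exists2 w, W w & f = (fun x => u x + w x).
  move=> f.
  have [df|ndf] := pselect (dualN nrm f); last by exists f.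
  have [u [w [du pu] [Ww ->]]] := Wdec f df.
  by exists u => _; split => //; split => //; exists w.
have [U HU] := choice ex.
have Uuniq : forall f u w, dualN nrm u -> perp J u -> W w ->
    f = (fun x => u x + w x) -> dualN nrm f -> U f = u.
  move=> f u w du pu Ww fE df.
  have [dU [pU [w' Ww' fE']]] := HU f df.
  have dE : (fun x => U f x - u x) = (fun x => -1 * w' x + w x).
    apply: funext => x.
    have : f x = f x by [].
    rewrite {1}fE' fE => /eqP; rewrite -subr_eq0 => /eqP h.
    apply/eqP; rewrite -subr_eq0; apply/eqP; rewrite -h; ring.
  have Wd' : W (fun x => U f x - u x) by rewrite dE; exact: Wlin.
  have dd : dualN nrm (fun x => U f x - u x).
    have := dual_comb (-1) du dU.
    by have -> : (fun x => -1 * u x + U f x) = (fun x => U f x - u x)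
      by apply: funext => x; ring.
  have pd : perp J (fun x => U f x - u x).
    by move=> v Jv; rewrite pU // pu // subrr.
  have := Winter _ dd pd Wd' => h0.
  apply: funext => x; have := congr1 (fun h => h x) h0 => /= /eqP.
  by rewrite subr_eq0 => /eqP.
have dq : forall h, dualN nrm h -> perp J h -> dualN (qnorm J) h.
  by move=> h; apply: dual_dualq.
have qd : forall h, dualN (qnorm J) h -> dualN nrm h /\ perp J h.
  by move=> h; apply: dualq_dual.
have fq : forall h, dualN (qnorm J) h -> fnorm (qnorm J) h = fnorm nrm h.
  by move=> h dh; have [d p] := qd h dh; apply: fnorm_q.
have dUq : forall f, dualN nrm f -> dualN (qnorm J) (U f).
  by move=> f df; have [d [p _]] := HU f df; apply: dq.
have UQ : forall g, dualN (qnorm J) g -> U g = g.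
  move=> g dg; have [d p] := qd g dg.
  apply: (Uuniq g g (fun _ => 0)) => //.
  by apply: funext => x; rewrite addr0.
exists (fun f => Q (U f)); split; [|split; [|split; [|split; [|split; [|split]]]]].
- by move=> f df; exact: (qd _ (Qd _ (dUq f df))).1.
- move=> a f g df dg.
  have [dUf [pUf [wf Wf fE]]] := HU f df.
  have [dUg [pUg [wg Wg gE]]] := HU g dg.
  have -> : U (fun x => a * f x + g x) = (fun x => a * U f x + U g x).
    apply: (Uuniq _ _ (fun x => a * wf x + wg x)).
    + exact: dual_comb.
    + exact: perp_comb.
    + exact: Wlin.
    + apply: funext => x.
      have -> : f x = U f x + wf x by exact: (congr1 (fun h => h x) fE).
      have -> : g x = U g x + wg x by exact: (congr1 (fun h => h x) gE).
      ring.
    + exact: dual_comb.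
  by apply: Qlin; apply: dUq.
- by move=> f df; rewrite UQ //; [apply: Qidem; apply: dUq | apply: Qd; apply: dUq].
- by move=> f df; apply: Qperp; apply: dUq.
- move=> g dg pg.
  have pJ : perp J g by move=> v Jv; apply: pg; apply: JY.
  have [f df <-] := Qsurj g (dq g dg pJ) pg.
  by exists f; [exact: (qd f df).1 | rewrite UQ].
- apply: (eq_trans _ Qsup); congr sup; apply/seteqP; split.
  + move=> _ [f [df f1] <-].
    have [dUf [pUf [wf Wf fE]]] := HU f df.
    exists (U f); last by rewrite fq //; apply: Qd; apply: dUq.
    split; first exact: dUq.
    rewrite fq; last exact: dUq.
    apply: le_trans f1.
    have -> : fnorm nrm f = fnorm nrm (U f) + fnorm nrm wf by rewrite -Wadd // -fE.
    by rewrite lerDl; apply: fnorm_ge0.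
  + move=> _ [u [du u1] <-].
    have [d p] := qd u du.
    exists u; last by rewrite UQ // fq //; apply: Qd.
    by split => //; rewrite -fq.
- move=> f vp df dvp pvp vpnz /=.
  have [dUf [pUf [wf Wf fE]]] := HU f df.
  have pvJ : perp J vp by move=> v Jv; apply: pvp; apply: JY.
  have dQ := qd _ (Qd _ (dUq f df)).
  have := QHB (U f) vp (dUq f df) (dq _ dvp pvJ) pvp vpnz => /=.
  set vs := (fun x => U f x - Q (U f) x).
  have dvs : dualN nrm vs /\ perp J vs.
    by split; [apply: dual_sub | apply: perp_sub]; case: dQ.
  have de : dualN nrm (fun x => vs x + vp x) /\ perp J (fun x => vs x + vp x).
    by split; [apply: dual_add | apply: perp_add]; case: dvs.
  rewrite !fq; [ | by apply: dq | by apply: dq; move: de => [? ?] | by apply: dq; move: dvs => [? ?]].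
  move=> [h1 h2].
  have h1' : fnorm nrm vs < fnorm nrm (fun x => vs x + vp x) := h1.
  have h2' : fnorm nrm vp <= fnorm nrm (fun x => vs x + vp x) := h2.
  have fx : forall x, f x = U f x + wf x by move=> x; exact: (congr1 (fun h => h x) fE).
  have -> : (fun x => f x - Q (U f) x + vp x) = (fun x => (vs x + vp x) + wf x).
    by apply: funext => x; rewrite fx /vs; ring.
  have -> : (fun x => f x - Q (U f) x) = (fun x => vs x + wf x).
    by apply: funext => x; rewrite fx /vs; ring.
  have E1 := Wadd (fun x => vs x + vp x) wf de.1 de.2 Wf.
  have E2 := Wadd vs wf dvs.1 dvs.2 Wf. rewrite /= in E1. rewrite E1 E2.
  have := fnorm_ge0 nrm wf; split; lra.
Qed.
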